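(* Let $n\ge 2$, let $H(t)$, $0\le t\le T$, be a piecewise-continuous U(1)-invariant Hamiltonian on $n$ qubits, and let $1\le k\le n$, let $i_1,\dots,i_k$ be $k$ distinct qubits and $a(t)$ a real piecewise-continuous function. Let $\Delta_3$ and $\Delta_3'$ denote the phases of the unitaries generated by $H(t)$ and by $H'(t)=H(t)+a(t)\,Z_{i_1}Z_{i_2}\cdots Z_{i_k}$, respectively. Then $\Delta_3'=\Delta_3\pmod{2\pi}$ if $k$ is even, and $$\Delta_3'=\Delta_3-4(k-1)\int_0^T a(t)\,dt \pmod{2\pi}$$ if $k$ is odd.
   Context: Qubits $1,\dots,n$, Hilbert space $(\mathbb{C}^2)^{\otimes n}$, $Z_j$ the Pauli $Z$ on qubit $j$. For $m=0,\dots,n$, $\Pi_m$ is the projector onto the span of computational basis states with exactly $m$ qubits in state $|1\rangle$. A Hamiltonian is U(1)-invariant if it commutes with $\sum_j Z_j$ (note $Z_{i_1}\cdots Z_{i_k}$ is U(1)-invariant). For a U(1)-invariant $H(t)$, $V=\mathcal{T}\exp(-i\int_0^T H(t)dt)$ (time-ordered exponential) satisfies $V=\bigoplus_{m=0}^n V_m$ with $V_m$ the restriction of $V$ to the range of $\Pi_m$; define $\theta_m=\arg\det(V_m)\in(-\pi,\pi]$ and $\Delta_3=\theta_{n-1}-\theta_1-(n-2)(\theta_n-\theta_0)\pmod{2\pi}$. *)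

(* Defs.v *)
From Stdlib Require Import Reals ClassicalEpsilon List.
From mathcomp Require Import all_boot all_algebra.
From mathcomp Require Import Rstruct.
From mathcomp.real_closed Require Import complex.
From Coquelicot Require Import Coquelicot.

Set Implicit Arguments.
Unset Strict Implicit.
Unset Printing Implicit Defensive.

Local Open Scope ring_scope.
Local Open Scope complex_scope.

Notation C := (R[i]).

(* Operators on n qubits: matrices indexed by the 2^n computational basis
   states 'I_(2^n); basis state x has qubit j (j : 'I_n) in state |1> iff
   the j-th binary digit of x is 1. *)
Notation Op n := ('M[C]_(2 ^ n)).

Definition bit (n : nat) (x : 'I_(2 ^ n)) (j : 'I_n) : bool := odd (x %/ 2 ^ j).

Definition weight (n : nat) (x : 'I_(2 ^ n)) : nat := \sum_(j < n) bit x j.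

Definition PauliZ (n : nat) (j : 'I_n) : Op n :=
  diag_mx (\row_(x < 2 ^ n) (if bit x j then -1 else 1)).

Definition Zprod (n : nat) (K : {set 'I_n}) : Op n := \prod_(j in K) PauliZ j.

Definition sumZ (n : nat) : Op n := \sum_(j < n) PauliZ j.

Definition U1_invariant (n : nat) (A : Op n) : Prop := A *m sumZ n = sumZ n *m A.

Definition adjoint (N : nat) (A : 'M[C]_N) : 'M[C]_N := map_mx conjc A^T.

Definition is_hermitian (N : nat) (A : 'M[C]_N) : Prop := adjoint A = A.

Definition piecewise_continuous (f : R -> R) (T : R) : Prop :=
  exists (m : nat) (p : nat -> R),
    p 0%N = R0 /\ p m = T /\
    (forall i, (i < m)%N -> Rlt (p i) (p i.+1)) /\
    (forall i, (i < m)%N ->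
       (forall x, Rlt (p i) x /\ Rlt x (p i.+1) -> continuous f x) /\
       (exists l : R, filterlim f (at_right (p i)) (locally l)) /\
       (exists l : R, filterlim f (at_left (p i.+1)) (locally l))).

Definition mx_piecewise_continuous (N : nat) (H : R -> 'M[C]_N) (T : R) : Prop :=
  forall i j, piecewise_continuous (fun t => complex.Re (H t i j)) T /\
              piecewise_continuous (fun t => complex.Im (H t i j)) T.

Definition mx_is_derive (N : nat) (U : R -> 'M[C]_N) (t : R) (D : 'M[C]_N) : Prop :=
  forall i j, is_derive (fun s => complex.Re (U s i j)) t (complex.Re (D i j)) /\
              is_derive (fun s => complex.Im (U s i j)) t (complex.Im (D i j)).

Definition mx_continuous_on_0T (N : nat) (U : R -> 'M[C]_N) (T : R) : Prop :=
  forall t, Rle R0 t /\ Rle t T -> forall i j,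
    filterlim (fun s => complex.Re (U s i j)) (within (fun s => Rle R0 s /\ Rle s T) (locally t))
              (locally (complex.Re (U t i j))) /\
    filterlim (fun s => complex.Im (U s i j)) (within (fun s => Rle R0 s /\ Rle s T) (locally t))
              (locally (complex.Im (U t i j))).

(* V = T exp(-i \int_0^T H(t) dt): V = U(T), where U is the (unique) continuous
   solution on [0,T] of the Schroedinger equation U'(t) = -i H(t) U(t), U(0) = 1,
   the equation holding at all but finitely many t in (0,T). *)
Definition time_ordered_exp (N : nat) (H : R -> 'M[C]_N) (T : R) (V : 'M[C]_N) : Prop :=
  exists U : R -> 'M[C]_N,
    U R0 = 1%:M /\ U T = V /\ mx_continuous_on_0T U T /\
    exists bad : list R, forall t, Rlt R0 t /\ Rlt t T -> ~ In t bad ->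
      mx_is_derive U t (- ('i *: (H t *m U t))).

(* restriction V_m of V to the range of Pi_m, written in the computational
   basis states of weight m *)
Definition weight_states (n m : nat) : {pred 'I_(2 ^ n)} := [pred x | weight x == m].
Arguments weight_states : clear implicits.

Definition block (n : nat) (V : Op n) (m : nat) : 'M[C]_#|weight_states n m| :=
  \matrix_(i, j) V (@enum_val _ (weight_states n m) i) (@enum_val _ (weight_states n m) j).

Definition arg (z : C) : R :=
  epsilon (inhabits R0)
    (fun th => (Rlt (Ropp PI) th /\ Rle th PI) /\ z = `|z| * ((cos th)%:C + 'i * (sin th)%:C)).

Definition theta (n : nat) (V : Op n) (m : nat) : R := arg (\det (block V m)).

Definition Delta3 (n : nat) (V : Op n) : R :=
  Rminus (Rminus (theta V n.-1) (theta V 1))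
    (Rmult (INR (n - 2)%N) (Rminus (theta V n) (theta V 0))).

Definition eqmod2pi (x y : R) : Prop := exists z : Z, Rminus x y = Rmult (Rmult 2%:R PI) (IZR z).

(* Main.v *)
Require Import Defs.
From Stdlib Require Import Reals List.
From mathcomp Require Import all_boot all_algebra.
From mathcomp Require Import Rstruct.
From mathcomp.real_closed Require Import complex.
From Coquelicot Require Import Coquelicot.
From Stdlib Require Import Classical ClassicalEpsilon Lra Lia.
Section RealAux.
Local Open Scope R_scope.

Lemma const_pw_aux (N : nat) : forall (f : R -> R) (l : list R) a b,
  le (length l) N -> a <= b ->
  (forall x, a <= x <= b -> continuous f x) ->
  (forall x, a < x < b -> ~ In x l -> is_derive f x 0) -> f a = f b.
Proof.
induction N as [|N IH]; intros f l a b Hl Hab Hc Hd;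
 (destruct (classic (exists c, In c l /\ a < c < b)) as [[c [Hcl Hc']]|Hno]).
- destruct l; [destruct Hcl | simpl in Hl; lia].
- assert (Hd' : forall x, Rmin a b < x < Rmax a b -> is_derive f x 0).
  { rewrite (Rmin_left a b Hab) (Rmax_right a b Hab). intros x Hx. apply Hd; auto. intro Hin. apply Hno. eauto. }
  assert (Hc2 : forall x, Rmin a b <= x <= Rmax a b -> continuity_pt f x).
  { rewrite (Rmin_left a b Hab) (Rmax_right a b Hab). intros x Hx; apply continuity_pt_filterlim; apply Hc; auto. }
  destruct (MVT_gen f a b (fun _ => 0) Hd' Hc2) as [c [_ Hc3]]. lra.
- pose (l' := remove Req_dec_T c l).
  assert (Hlen : lt (length l') (length l)) by (apply remove_length_lt; auto).
  assert (Hl' : le (length l') N) by lia.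
  assert (Hrem : forall x, x <> c -> ~ In x l' -> ~ In x l).
  { intros x Hx Hn Hin. apply Hn. apply in_in_remove; auto. }
  transitivity (f c).
  + apply (IH f l' a c Hl'); try lra.
    * intros x Hx; apply Hc; lra.
    * intros x Hx Hn; apply Hd; [lra|]. apply Hrem; auto; lra.
  + apply (IH f l' c b Hl'); try lra.
    * intros x Hx; apply Hc; lra.
    * intros x Hx Hn; apply Hd; [lra|]. apply Hrem; auto; lra.
- assert (Hd' : forall x, Rmin a b < x < Rmax a b -> is_derive f x 0).
  { rewrite (Rmin_left a b Hab) (Rmax_right a b Hab). intros x Hx. apply Hd; auto. intro Hin. apply Hno. eauto. }
  assert (Hc2 : forall x, Rmin a b <= x <= Rmax a b -> continuity_pt f x).
  { rewrite (Rmin_left a b Hab) (Rmax_right a b Hab). intros x Hx; apply continuity_pt_filterlim; apply Hc; auto. }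
  destruct (MVT_gen f a b (fun _ => 0) Hd' Hc2) as [c0 [_ Hc3]]. lra.
Qed.

Lemma const_pw (f : R -> R) (l : list R) a b :
  a <= b ->
  (forall x, a <= x <= b -> continuous f x) ->
  (forall x, a < x < b -> ~ In x l -> is_derive f x 0) -> f a = f b.
Proof. apply (@const_pw_aux (length l)); lia. Qed.

End RealAux.
From mathcomp Require Import zify.
Section PC.
Local Open Scope R_scope.

Lemma ball_R (x e y : R) : ball x e y <-> Rabs (y - x) < e.
Proof. reflexivity. Qed.

Lemma piece_int (f : R -> R) c d l1 l2 : c < d ->
  (forall x, c < x < d -> continuous f x) ->
  filterlim f (at_right c) (locally l1) ->
  filterlim f (at_left d) (locally l2) -> ex_RInt f c d.
Proof.
intros Hcd Hc H1 H2.
pose g := fun x => if Rle_dec x c then l1 else if Rle_dec d x then l2 else f x.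
apply ex_RInt_ext with g.
{ intros x Hx. rewrite Rmin_left in Hx; [|lra]. rewrite Rmax_right in Hx; [|lra].
  unfold g. destruct (Rle_dec x c); [lra|]. destruct (Rle_dec d x); [lra|]. reflexivity. }
apply (@ex_RInt_continuous R_CompleteNormedModule). intros z Hz.
rewrite Rmin_left in Hz; [|lra]. rewrite Rmax_right in Hz; [|lra].
destruct (Req_dec z c) as [->|Hzc]; [|destruct (Req_dec z d) as [->|Hzd]].
- unfold continuous. replace (g c) with l1 by (unfold g; destruct (Rle_dec c c); [reflexivity|lra]).
  apply filterlim_locally. intros eps.
  destruct (proj1 (filterlim_locally f l1) H1 eps) as [del Hdel].
  assert (Hp : 0 < Rmin del (d - c)) by (apply Rmin_pos; [apply cond_pos|lra]).
  exists (mkposreal _ Hp). intros y Hy. simpl in Hy. assert (Hy' := Hy); unfold ball in Hy'; simpl in Hy'; unfold AbsRing_ball, abs, minus, plus, opp in Hy'; simpl in Hy'; clear Hy; rename Hy' into Hy.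
  unfold g. destruct (Rle_dec y c).
  + apply ball_center.
  + destruct (Rle_dec d y).
    * exfalso. pose proof (Rmin_r del (d - c)). apply Rabs_def2 in Hy. lra.
    * apply Hdel; [|lra]. unfold ball; simpl; unfold AbsRing_ball, abs, minus, plus, opp; simpl. pose proof (Rmin_l del (d - c)). lra.
- unfold continuous. replace (g d) with l2 by (unfold g; destruct (Rle_dec d c); [lra|]; destruct (Rle_dec d d); [reflexivity|lra]).
  apply filterlim_locally. intros eps.
  destruct (proj1 (filterlim_locally f l2) H2 eps) as [del Hdel].
  assert (Hp : 0 < Rmin del (d - c)) by (apply Rmin_pos; [apply cond_pos|lra]).
  exists (mkposreal _ Hp). intros y Hy. simpl in Hy. assert (Hy' := Hy); unfold ball in Hy'; simpl in Hy'; unfold AbsRing_ball, abs, minus, plus, opp in Hy'; simpl in Hy'; clear Hy; rename Hy' into Hy.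
  unfold g. destruct (Rle_dec y c).
  + exfalso. pose proof (Rmin_r del (d - c)). apply Rabs_def2 in Hy. lra.
  + destruct (Rle_dec d y).
    * apply ball_center.
    * apply Hdel; [|lra]. unfold ball; simpl; unfold AbsRing_ball, abs, minus, plus, opp; simpl. pose proof (Rmin_l del (d - c)). lra.
- assert (Hz' : c < z < d) by lra.
  apply continuous_ext_loc with f; [|apply Hc; auto].
  assert (Hp : 0 < Rmin (z - c) (d - z)) by (apply Rmin_pos; lra).
  exists (mkposreal _ Hp). intros y Hy. simpl in Hy. assert (Hy' := Hy); unfold ball in Hy'; simpl in Hy'; unfold AbsRing_ball, abs, minus, plus, opp in Hy'; simpl in Hy'; clear Hy; rename Hy' into Hy. apply Rabs_def2 in Hy.
  pose proof (Rmin_l (z - c) (d - z)). pose proof (Rmin_r (z - c) (d - z)).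
  unfold g. destruct (Rle_dec y c); [lra|]. destruct (Rle_dec d y); [lra|]. reflexivity.
Qed.

Lemma pc_mono m (p : nat -> R) : p 0%N = 0 ->
  (forall i, (i < m)%N -> p i < p i.+1) -> forall j, (j <= m)%N -> 0 <= p j.
Proof.
intros H0 Hinc j. induction j as [|j IH]; intros Hj.
- rewrite H0; lra.
- assert (Hj' : (j < m)%N) by lia. specialize (Hinc j Hj'). specialize (IH ltac:(lia)). lra.
Qed.

Lemma pc_int (f : R -> R) T : piecewise_continuous f T ->
  forall t, 0 <= t <= T -> ex_RInt f 0 t.
Proof.
intros [m [p [H0 [HT [Hinc Hpc]]]]].
assert (Hpiece : forall i, (i < m)%N -> ex_RInt f (p i) (p i.+1)).
{ intros i Hi. destruct (Hpc i Hi) as [Hc [[l1 H1] [l2 H2]]].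
  apply (piece_int f (p i) (p i.+1) l1 l2); auto. }
assert (Hj : forall j, (j <= m)%N -> forall t, 0 <= t <= p j -> ex_RInt f 0 t).
{ intros j. induction j as [|j IH]; intros Hjm t Ht.
  - rewrite H0 in Ht. replace t with 0 by lra. apply ex_RInt_point.
  - destruct (Rle_dec t (p j)) as [Hle|Hgt].
    + apply IH; [lia|lra].
    + assert (Hj' : (j < m)%N) by lia.
      pose proof (pc_mono m p H0 Hinc j ltac:(lia)).
      apply ex_RInt_Chasles with (p j).
      * apply IH; [lia|lra].
      * apply (@ex_RInt_Chasles_1 R_CompleteNormedModule) with (p j.+1); [lra|]. apply Hpiece; auto. }
intros t Ht. apply (Hj m); [lia|]. rewrite HT; lra.
Qed.

Lemma In_iota (n a j : nat) : (a <= j)%N -> (j < a + n)%N -> In j (seq.iota a n).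
Proof.
revert a. induction n as [|n IH]; intros a H1 H2; [lia|].
simpl. destruct (Nat.eq_dec a j) as [E|E]; [left; auto|right; apply IH; lia].
Qed.

Lemma pc_cont (f : R -> R) T : piecewise_continuous f T ->
  exists l : list R, forall x, 0 < x < T -> ~ In x l -> continuous f x.
Proof.
intros [m [p [H0 [HT [Hinc Hpc]]]]].
exists (map p (seq.iota 0%N m.+1)). intros x Hx Hn.
assert (Hnp : forall j, (j <= m)%N -> x <> p j).
{ intros j Hj E. apply Hn. rewrite E. apply in_map. apply In_iota; lia. }
assert (Hstep : forall j, (j <= m)%N -> p j < x \/ exists i, (i < j)%N /\ p i < x < p i.+1).
{ intros j. induction j as [|j IH]; intros Hj.
  - left. rewrite H0; lra.
  - destruct (IH ltac:(lia)) as [Hl|[i [Hi Hi2]]].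
    + destruct (Rlt_dec (p j.+1) x) as [Hlt|Hge]; [left; auto|].
      right. exists j. split; [lia|]. split; auto.
      pose proof (Hnp j.+1 Hj). lra.
    + right. exists i. split; [lia|auto]. }
destruct (Hstep m (leqnn m)) as [Hl|[i [Hi Hi2]]].
- rewrite HT in Hl. lra.
- destruct (Hpc i Hi) as [Hc _]. apply Hc; auto.
Qed.
End PC.
Section RIntAux.
Local Open Scope R_scope.

Definition clamp (T s : R) : R := Rmax 0 (Rmin s T).

Lemma clamp_in T s : 0 <= T -> 0 <= clamp T s <= T.
Proof. intros HT. unfold clamp. split; [apply Rmax_l|]. apply Rmax_lub; [lra|apply Rmin_r]. Qed.

Lemma clamp_id T s : 0 <= s <= T -> clamp T s = s.
Proof. intros Hs. unfold clamp. rewrite Rmin_left; [|lra]. rewrite Rmax_right; lra. Qed.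

Lemma clamp_lip T x y : 0 <= T -> Rabs (clamp T x - clamp T y) <= Rabs (x - y).
Proof.
intros HT. unfold clamp.
destruct (Rle_dec x T); destruct (Rle_dec y T);
[rewrite (Rmin_left x T) ?(Rmin_left y T) | rewrite (Rmin_left x T) ?(Rmin_right y T)
|rewrite (Rmin_right x T) ?(Rmin_left y T) | rewrite (Rmin_right x T) ?(Rmin_right y T)]; try lra;
(destruct (Rle_dec 0 x); destruct (Rle_dec 0 y)); try lra;
repeat (first [rewrite Rmax_right; [|lra] | rewrite Rmax_left; [|lra]]);
unfold Rabs; repeat destruct Rcase_abs; lra.
Qed.

Lemma clamp_loc T t : 0 < t < T -> locally t (fun s => clamp T s = s).
Proof.
intros Ht. assert (Hp : 0 < Rmin t (T - t)) by (apply Rmin_pos; lra).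
exists (mkposreal _ Hp). intros y Hy.
assert (Hy' := Hy); unfold ball in Hy'; simpl in Hy'; unfold AbsRing_ball, abs, minus, plus, opp in Hy'; simpl in Hy'.
apply Rabs_def2 in Hy'. pose proof (Rmin_l t (T - t)). pose proof (Rmin_r t (T - t)).
apply clamp_id; lra.
Qed.

Lemma clamp_cont T s : 0 <= T -> continuous (clamp T) s.
Proof.
intros HT. apply filterlim_locally. intros eps. exists eps. intros y Hy.
unfold ball in *; simpl in *; unfold AbsRing_ball, abs, minus, plus, opp in *; simpl in *.
eapply Rle_lt_trans; [apply clamp_lip; auto|auto].
Qed.

Lemma rint_lip (a : R -> R) T : 0 <= T -> (forall t, 0 <= t <= T -> ex_RInt a 0 t) ->
  exists M, 0 <= M /\ forall x y, 0 <= x <= T -> 0 <= y <= T ->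
    Rabs (RInt a 0 x - RInt a 0 y) <= M * Rabs (x - y).
Proof.
intros HT Hex.
destruct (ex_RInt_ub a 0 T (Hex T ltac:(lra))) as [M0 HM0].
rewrite Rmin_left in HM0; [|lra]. rewrite Rmax_right in HM0; [|lra].
exists (Rabs M0). split; [apply Rabs_pos|].
assert (Hle : forall x y, 0 <= y <= x -> x <= T -> Rabs (RInt a 0 x - RInt a 0 y) <= Rabs M0 * (x - y)).
{ intros x y Hy Hx.
  assert (E1 : ex_RInt a 0 y) by (apply Hex; lra).
  assert (E2 : ex_RInt a y x) by (apply (@ex_RInt_Chasles_2 R_CompleteNormedModule) with 0; [lra|apply Hex; lra]).
  rewrite <- (RInt_Chasles a 0 y x E1 E2).
  replace (plus (RInt a 0 y) (RInt a y x) - RInt a 0 y) with (RInt a y x) by (unfold plus; simpl; lra).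
  rewrite Rmult_comm. apply abs_RInt_le_const; [lra|auto|].
  intros t Ht. eapply Rle_trans; [apply HM0; lra|apply RRle_abs]. }
intros x y Hx Hy. destruct (Rle_dec y x).
- rewrite (Rabs_right (x - y)); [|lra]. apply Hle; lra.
- rewrite Rabs_minus_sym. rewrite (Rabs_left (x - y)); [|lra].
  replace (- (x - y)) with (y - x) by ring. apply Hle; lra.
Qed.

Lemma rint_cont (a : R -> R) T : 0 <= T -> (forall t, 0 <= t <= T -> ex_RInt a 0 t) ->
  forall s, continuous (fun s => RInt a 0 (clamp T s)) s.
Proof.
intros HT Hex s. destruct (rint_lip a T HT Hex) as [M [HM Hlip]].
apply filterlim_locally. intros eps.
assert (Hp : 0 < eps / (M + 1)) by (apply Rdiv_lt_0_compat; [apply cond_pos|lra]).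
exists (mkposreal _ Hp). intros y Hy.
unfold ball in *; simpl in *; unfold AbsRing_ball, abs, minus, plus, opp in *; simpl in *.
eapply Rle_lt_trans; [apply Hlip; apply clamp_in; auto|].
eapply Rle_lt_trans; [apply Rmult_le_compat_l; [auto|apply clamp_lip; auto]|].
apply Rle_lt_trans with ((M + 1) * Rabs (y - s)).
- apply Rmult_le_compat_r; [apply Rabs_pos|lra].
- replace (pos eps) with ((M + 1) * (eps / (M + 1))) by (field; lra).
  apply Rmult_lt_compat_l; [lra|auto].
Qed.

Lemma rint_der (a : R -> R) T t : (forall t, 0 <= t <= T -> ex_RInt a 0 t) ->
  0 < t < T -> continuous a t ->
  is_derive (fun s => RInt a 0 (clamp T s)) t (a t).
Proof.
intros Hex Ht Hc. apply (is_derive_RInt a _ 0 t); auto.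
assert (Hp : 0 < Rmin t (T - t)) by (apply Rmin_pos; lra).
exists (mkposreal _ Hp). intros y Hy.
assert (Hy' := Hy); unfold ball in Hy'; simpl in Hy'; unfold AbsRing_ball, abs, minus, plus, opp in Hy'; simpl in Hy'.
apply Rabs_def2 in Hy'. pose proof (Rmin_l t (T - t)). pose proof (Rmin_r t (T - t)).
rewrite clamp_id; [|lra]. apply (RInt_correct a). apply Hex; lra.
Qed.

End RIntAux.
From mathcomp Require Import ring.
Set Implicit Arguments. Unset Strict Implicit.
Section RDer.
Local Open Scope R_scope.
Lemma dR_mul (f g : R -> R) t df dg : is_derive f t df -> is_derive g t dg ->
  is_derive (fun s => f s * g s) t (df * g t + f t * dg).
Proof. intros Hf Hg. apply (is_derive_mult f g t df dg Hf Hg). intros; apply Rmult_comm. Qed.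
Lemma dR_plus (f g : R -> R) t df dg : is_derive f t df -> is_derive g t dg ->
  is_derive (fun s => f s + g s) t (df + dg).
Proof. intros Hf Hg. apply (is_derive_plus f g t df dg Hf Hg). Qed.
Lemma dR_minus (f g : R -> R) t df dg : is_derive f t df -> is_derive g t dg ->
  is_derive (fun s => f s - g s) t (df - dg).
Proof. intros Hf Hg. apply (is_derive_minus f g t df dg Hf Hg). Qed.
Lemma dR_opp (f : R -> R) t df : is_derive f t df -> is_derive (fun s => - f s) t (- df).
Proof. intros Hf. apply (is_derive_opp f t df Hf). Qed.
Lemma dR_const (c : R) (t : R) : is_derive (fun _ : R => c) t 0.
Proof. apply (is_derive_const c t). Qed.
Lemma dR_eq (f : R -> R) t l l' : is_derive f t l -> l = l' -> is_derive f t l'.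
Proof. intros H ->; exact H. Qed.
Lemma dR_ext (f g : R -> R) t l : (forall s, f s = g s) -> is_derive f t l -> is_derive g t l.
Proof. intros E H. apply (is_derive_ext f g t l E H). Qed.
Lemma cR_mul (f g : R -> R) t : continuous f t -> continuous g t -> continuous (fun s => f s * g s) t.
Proof. intros Hf Hg. apply (continuous_mult f g t Hf Hg). Qed.
Lemma cR_plus (f g : R -> R) t : continuous f t -> continuous g t -> continuous (fun s => f s + g s) t.
Proof. intros Hf Hg. apply (continuous_plus f g t Hf Hg). Qed.
Lemma cR_minus (f g : R -> R) t : continuous f t -> continuous g t -> continuous (fun s => f s - g s) t.
Proof. intros Hf Hg. apply (continuous_minus f g t Hf Hg). Qed.
Lemma cR_opp (f : R -> R) t : continuous f t -> continuous (fun s => - f s) t.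
Proof. intros Hf. apply (continuous_opp f t Hf). Qed.
Lemma cR_const (c : R) (t : R) : continuous (fun _ : R => c) t.
Proof. apply continuous_const. Qed.
Lemma cR_ext (f g : R -> R) t : (forall s, f s = g s) -> continuous f t -> continuous g t.
Proof. intros E H. apply (continuous_ext f g t E H). Qed.
End RDer.

Notation CC := (R[i]).
Notation cRe := complex.Re.
Notation cIm := complex.Im.
Section CCalc.
Local Open Scope ring_scope.
Local Open Scope complex_scope.

Definition cder (f : R -> CC) (t : R) (d : CC) : Prop :=
  is_derive (fun s => cRe (f s)) t (cRe d) /\ is_derive (fun s => cIm (f s)) t (cIm d).
Definition ccont (f : R -> CC) (t : R) : Prop :=
  continuous (fun s => cRe (f s)) t /\ continuous (fun s => cIm (f s)) t.

Lemma ReD (x y : CC) : cRe (x + y) = cRe x + cRe y. Proof. by case: x; case: y. Qed.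
Lemma ImD (x y : CC) : cIm (x + y) = cIm x + cIm y. Proof. by case: x; case: y. Qed.
Lemma ReN (x : CC) : cRe (- x) = - cRe x. Proof. by case: x. Qed.
Lemma ImN (x : CC) : cIm (- x) = - cIm x. Proof. by case: x. Qed.
Lemma ReM (x y : CC) : cRe (x * y) = cRe x * cRe y - cIm x * cIm y. Proof. by case: x; case: y. Qed.
Lemma ImM (x y : CC) : cIm (x * y) = cRe x * cIm y + cIm x * cRe y. Proof. by case: x; case: y. Qed.

Lemma cder_ext (f g : R -> CC) t d : (forall s, f s = g s) -> cder f t d -> cder g t d.
Proof. move=> E [H1 H2]; split; [apply: dR_ext H1|apply: dR_ext H2] => s /=; by rewrite E. Qed.
Lemma ccont_ext (f g : R -> CC) t : (forall s, f s = g s) -> ccont f t -> ccont g t.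
Proof. move=> E [H1 H2]; split; [apply: cR_ext H1|apply: cR_ext H2] => s /=; by rewrite E. Qed.

Lemma cder_add f g t df dg : cder f t df -> cder g t dg -> cder (fun s => f s + g s) t (df + dg).
Proof.
move=> [F1 F2] [G1 G2]; split.
- apply: (@dR_ext (fun s => Rplus (cRe (f s)) (cRe (g s)))); first by move=> s; rewrite ReD.
  rewrite ReD; exact: dR_plus.
- apply: (@dR_ext (fun s => Rplus (cIm (f s)) (cIm (g s)))); first by move=> s; rewrite ImD.
  rewrite ImD; exact: dR_plus.
Qed.

Lemma cder_mul f g t df dg : cder f t df -> cder g t dg ->
  cder (fun s => f s * g s) t (df * g t + f t * dg).
Proof.
move=> [F1 F2] [G1 G2]; split.
- apply: (@dR_ext (fun s => Rminus (Rmult (cRe (f s)) (cRe (g s))) (Rmult (cIm (f s)) (cIm (g s))))); first by move=> s; rewrite ReM.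
  apply: dR_eq; first exact: dR_minus (dR_mul F1 G1) (dR_mul F2 G2).
  rewrite ReD !ReM !RealsE; ring.
- apply: (@dR_ext (fun s => Rplus (Rmult (cRe (f s)) (cIm (g s))) (Rmult (cIm (f s)) (cRe (g s))))); first by move=> s; rewrite ImM.
  apply: dR_eq; first exact: dR_plus (dR_mul F1 G2) (dR_mul F2 G1).
  rewrite ImD !ImM !RealsE; ring.
Qed.

Lemma cder_const (c : CC) t : cder (fun _ => c) t 0.
Proof. split; exact: dR_const. Qed.

Lemma ccont_add f g t : ccont f t -> ccont g t -> ccont (fun s => f s + g s) t.
Proof.
move=> [F1 F2] [G1 G2]; split.
- apply: (@cR_ext (fun s => Rplus (cRe (f s)) (cRe (g s)))); first by move=> s; rewrite ReD.
  exact: cR_plus.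
- apply: (@cR_ext (fun s => Rplus (cIm (f s)) (cIm (g s)))); first by move=> s; rewrite ImD.
  exact: cR_plus.
Qed.

Lemma ccont_mul f g t : ccont f t -> ccont g t -> ccont (fun s => f s * g s) t.
Proof.
move=> [F1 F2] [G1 G2]; split.
- apply: (@cR_ext (fun s => Rminus (Rmult (cRe (f s)) (cRe (g s))) (Rmult (cIm (f s)) (cIm (g s))))); first by move=> s; rewrite ReM.
  exact: cR_minus (cR_mul F1 G1) (cR_mul F2 G2).
- apply: (@cR_ext (fun s => Rplus (Rmult (cRe (f s)) (cIm (g s))) (Rmult (cIm (f s)) (cRe (g s))))); first by move=> s; rewrite ImM.
  exact: cR_plus (cR_mul F1 G2) (cR_mul F2 G1).
Qed.

Lemma ccont_const (c : CC) t : ccont (fun _ => c) t.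
Proof. split; exact: cR_const. Qed.

End CCalc.
From mathcomp Require Import fingroup perm.
Section Big.
Local Open Scope ring_scope.
Local Open Scope complex_scope.
Import GRing.Theory.

Lemma cder_sum (I : Type) (r : seq I) (P : pred I) (F : I -> R -> CC) (D : I -> CC) t :
  (forall i, P i -> cder (F i) t (D i)) ->
  cder (fun s => \sum_(i <- r | P i) F i s) t (\sum_(i <- r | P i) D i).
Proof.
move=> HD; elim: r => [|x r IH].
- rewrite big_nil; apply: (@cder_ext (fun _ => 0)); first by move=> s; rewrite big_nil.
  exact: cder_const.
- rewrite big_cons; case Px: (P x).
  + apply: (@cder_ext (fun s => F x s + \sum_(i <- r | P i) F i s)); first by move=> s; rewrite big_cons Px.
    exact: cder_add (HD x Px) IH.
  + by apply: (@cder_ext (fun s => \sum_(i <- r | P i) F i s)) IH => s; rewrite big_cons Px.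
Qed.

Lemma ccont_sum (I : Type) (r : seq I) (P : pred I) (F : I -> R -> CC) t :
  (forall i, P i -> ccont (F i) t) -> ccont (fun s => \sum_(i <- r | P i) F i s) t.
Proof.
move=> HD; elim: r => [|x r IH].
- apply: (@ccont_ext (fun _ => 0)); first by move=> s; rewrite big_nil.
  exact: ccont_const.
- case Px: (P x).
  + apply: (@ccont_ext (fun s => F x s + \sum_(i <- r | P i) F i s)); first by move=> s; rewrite big_cons Px.
    exact: ccont_add (HD x Px) IH.
  + by apply: (@ccont_ext (fun s => \sum_(i <- r | P i) F i s)) IH => s; rewrite big_cons Px.
Qed.

Lemma ccont_prod (I : Type) (r : seq I) (F : I -> R -> CC) t :
  (forall i, ccont (F i) t) -> ccont (fun s => \prod_(i <- r) F i s) t.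
Proof.
move=> HD; elim: r => [|x r IH].
- apply: (@ccont_ext (fun _ => 1)); first by move=> s; rewrite big_nil.
  exact: ccont_const.
- apply: (@ccont_ext (fun s => F x s * \prod_(i <- r) F i s)); first by move=> s; rewrite big_cons.
  exact: ccont_mul (HD x) IH.
Qed.

Lemma cder_prod (I : eqType) (r : seq I) (F : I -> R -> CC) (D : I -> CC) t :
  uniq r -> (forall i, cder (F i) t (D i)) ->
  cder (fun s => \prod_(i <- r) F i s) t
       (\sum_(j <- r) \prod_(i <- r) (if i == j then D i else F i t)).
Proof.
move=> + HD; elim: r => [|x r IH] /=.
- move=> _; rewrite big_nil; apply: (@cder_ext (fun _ => 1)); first by move=> s; rewrite big_nil.
  exact: cder_const.
- move=> /andP [xr ur].
  apply: (@cder_ext (fun s => F x s * \prod_(i <- r) F i s)); first by move=> s; rewrite big_cons.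
  have := cder_mul (HD x) (IH ur).
  congr cder.
  rewrite big_cons big_cons eqxx; congr (_ * _ + _).
  + apply: eq_big_seq => i ir /=; case: eqP => // E; by move: xr; rewrite -E ir.
  + rewrite big_distrr /=; apply: eq_big_seq => j jr /=.
    rewrite big_cons; case: eqP => [E|_] //; by move: xr; rewrite E jr.
Qed.

Definition rowrep (N : nat) (A B : 'M[CC]_N) (j : 'I_N) : 'M[CC]_N :=
  \matrix_(i, k) if i == j then B i k else A i k.

Lemma cder_det (N : nat) (M : R -> 'M[CC]_N) (D : 'M[CC]_N) t :
  (forall i j, cder (fun s => M s i j) t (D i j)) ->
  cder (fun s => \det (M s)) t (\sum_(j < N) \det (rowrep (M t) D j)).
Proof.
move=> HD.
have E : \sum_(j < N) \det (rowrep (M t) D j) =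
  \sum_(s : 'S_N) (0 * \prod_i M t i (s i) + (-1) ^+ s *
     \sum_(j <- index_enum 'I_N) \prod_(i <- index_enum 'I_N) (if i == j then D i (s i) else M t i (s i))).
{ rewrite /determinant exchange_big /=; apply: eq_bigr => s _.
  rewrite mul0r add0r big_distrr /=; apply: eq_bigr => j _; congr (_ * _).
  by apply: eq_bigr => i _; rewrite mxE; case: eqP. }
rewrite E /determinant; apply: cder_sum => s _.
apply: cder_mul; first exact: cder_const.
apply: cder_prod; first exact: index_enum_uniq.
by move=> i; apply: HD.
Qed.

Lemma ccont_det (N : nat) (M : R -> 'M[CC]_N) t :
  (forall i j, ccont (fun s => M s i j) t) -> ccont (fun s => \det (M s)) t.
Proof.
move=> HD; rewrite /determinant; apply: ccont_sum => s _.
apply: ccont_mul; first exact: ccont_const.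
apply: ccont_prod => i; exact: HD.
Qed.

End Big.
Section LinAlg.
Local Open Scope ring_scope.
Local Open Scope complex_scope.
Import GRing.Theory Num.Theory.

Lemma det_rowrep_mul (N : nat) (A M : 'M[CC]_N) :
  \sum_(j < N) \det (rowrep M (A *m M) j) = \tr A * \det M.
Proof.
rewrite /mxtrace mulr_suml; apply: eq_bigr => j _.
pose P := \matrix_(i, l) if i == j then A i l else (1%:M : 'M[CC]_N) i l.
have -> : rowrep M (A *m M) j = P *m M.
{ apply/matrixP => i k; rewrite !mxE; case: eqP => [->|Hij].
  - by apply: eq_bigr => l _; rewrite /P mxE eqxx.
  - move/eqP/negbTE: Hij => Hij.
    have -> : M i k = (1%:M *m M) i k by rewrite mul1mx.
    rewrite mxE; apply: eq_bigr => l _; by rewrite /P !mxE Hij. }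
rewrite det_mulmx; congr (_ * _).
rewrite (expand_det_col P j) (bigD1 j) //= big1 ?addr0.
- rewrite /cofactor /P mxE eqxx.
  have -> : row' j (col' j P) = 1%:M.
  { apply/matrixP => a b; rewrite !mxE.
    have /negbTE -> : lift j a != j by rewrite eq_sym neq_lift.
    by rewrite (inj_eq (@lift_inj _ j)). }
  by rewrite det1 mulr1 addnn -muln2 exprM sqrr_sign mulr1.
- move=> i /negbTE Hij; by rewrite /P !mxE Hij ?mulr0n mul0r.
Qed.


Lemma Re_sum (I : Type) (r : seq I) (P : pred I) (F : I -> CC) :
  cRe (\sum_(i <- r | P i) F i) = \sum_(i <- r | P i) cRe (F i).
Proof. elim: r => [|x r IH]; first by rewrite !big_nil. rewrite !big_cons; case: (P x); by rewrite ?ReD IH. Qed.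
Lemma Im_sum (I : Type) (r : seq I) (P : pred I) (F : I -> CC) :
  cIm (\sum_(i <- r | P i) F i) = \sum_(i <- r | P i) cIm (F i).
Proof. elim: r => [|x r IH]; first by rewrite !big_nil. rewrite !big_cons; case: (P x); by rewrite ?ImD IH. Qed.

Lemma block_mul n m (A B : Op n) :
  (forall x y, weight x = m -> weight y != m -> A x y = 0) ->
  block (A *m B) m = block A m *m block B m.
Proof.
move=> HA; apply/matrixP => i j; rewrite !mxE.
rewrite (bigID (fun x => x \in weight_states n m)) /= [X in _ + X]big1 ?addr0.
- rewrite big_enum_val /=; apply: eq_bigr => l _; by rewrite !mxE.
- move=> x Hx; rewrite HA ?mul0r //; by have /eqP := enum_valP i.
Qed.

Lemma blockD n m (A B : Op n) : block (A + B) m = block A m + block B m.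
Proof. by apply/matrixP => i j; rewrite !mxE. Qed.
Lemma blockZ n m (c : CC) (A : Op n) : block (c *: A) m = c *: block A m.
Proof. by apply/matrixP => i j; rewrite !mxE. Qed.
Lemma blockN n m (A : Op n) : block (- A) m = - block A m.
Proof. by apply/matrixP => i j; rewrite !mxE. Qed.
Lemma block1 n m : block (1%:M : Op n) m = 1%:M.
Proof. apply/matrixP => i j; rewrite !mxE; by rewrite (inj_eq enum_val_inj). Qed.

Lemma trace_block n m (A : Op n) : \tr (block A m) = \sum_(x in weight_states n m) A x x.
Proof. rewrite /mxtrace [RHS]big_enum_val; apply: eq_bigr => i _; by rewrite mxE. Qed.

Lemma sumZ_diag n : sumZ n = diag_mx (\row_x ((n%:R : CC) - 2%:R * (weight x)%:R)).
Proof.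
apply/matrixP => x y; rewrite /sumZ summxE !mxE.
under eq_bigr do rewrite !mxE.
rewrite sumrMnl; congr (_ *+ _).
have -> : \sum_(j < n) (if bit x j then -1 else 1 : CC) = \sum_(j < n) (1 - 2%:R * ((bit x j : nat)%:R)).
{ apply: eq_bigr => j _; case: (bit x j) => /=; ring. }
by rewrite sumrB sumr_const card_ord -big_distrr /= -natr_sum.
Qed.

Lemma U1_zero n (A : Op n) : U1_invariant A -> forall x y, weight x != weight y -> A x y = 0.
Proof.
move=> HA x y Hxy.
have E := congr1 (fun M : Op n => M x y) HA; simpl in E.
rewrite sumZ_diag mul_mx_diag mul_diag_mx !mxE in E.
have H2 : A x y * (2%:R * ((weight x)%:R - (weight y)%:R)) =
  A x y * ((n%:R : CC) - 2%:R * (weight y)%:R) - ((n%:R : CC) - 2%:R * (weight x)%:R) * A x y by ring.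
rewrite E subrr in H2.
move/eqP: H2; rewrite mulf_eq0 => /orP [/eqP //|].
rewrite mulf_eq0 pnatr_eq0 /= subr_eq0 eqr_nat => /negPn; by rewrite (negbTE Hxy).
Qed.

Lemma prodZ_diag n (K : {set 'I_n}) (r : seq 'I_n) :
  \prod_(j <- r | j \in K) PauliZ j =
  diag_mx (\row_x \prod_(j <- r | j \in K) (if bit x j then -1 else 1 : CC)).
Proof.
elim: r => [|j r IH].
- by rewrite big_nil; apply/matrixP => x y; rewrite !mxE big_nil.
- rewrite big_cons; case HjK: (j \in K).
  + rewrite IH /PauliZ -mulmxE mulmx_diag; apply/matrixP => x y; by rewrite !mxE big_cons HjK.
  + rewrite IH; apply/matrixP => x y; by rewrite !mxE big_cons HjK.
Qed.

Lemma Zprod_diag n (K : {set 'I_n}) :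
  Zprod K = diag_mx (\row_x \prod_(j in K) (if bit x j then -1 else 1 : CC)).
Proof. exact: prodZ_diag. Qed.

Lemma herm_diag N (A : 'M[CC]_N) : is_hermitian A -> forall x, cIm (A x x) = 0.
Proof.
move=> HA x; have E := congr1 (fun M : 'M[CC]_N => M x x) HA; simpl in E.
rewrite !mxE in E. move: E; case: (A x x) => a b /= [] Hb.
have : b + b = 0 by rewrite -{1}Hb addNr.
by rewrite -mulr2n -mulr_natr => /eqP; rewrite mulf_eq0 pnatr_eq0 orbF => /eqP.
Qed.

End LinAlg.
Section Trig.
Local Open Scope R_scope.

Lemma trig_inj x y : cos x = cos y -> sin x = sin y -> exists k : Z, x - y = 2 * PI * IZR k.
Proof.
intros Hc Hs. set d := x - y.
assert (Hcd : cos d = 1).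
{ unfold d. rewrite cos_minus Hc Hs. pose proof (sin2_cos2 y). unfold Rsqr in H. lra. }
assert (Hd2 : cos (2 * (d / 2)) = 1) by (replace (2 * (d / 2)) with d by lra; auto).
rewrite cos_2a_sin in Hd2.
assert (Hs0 : sin (d / 2) = 0).
{ assert (sin (d/2) * sin (d/2) = 0) by lra. destruct (Rmult_integral _ _ H); auto. }
destruct (sin_eq_0_0 _ Hs0) as [k Hk]. exists k. lra.
Qed.

Lemma trig_exists a b : a * a + b * b = 1 ->
  exists th, (- PI < th <= PI) /\ cos th = a /\ sin th = b.
Proof.
intros Hab. assert (Ha : -1 <= a <= 1) by nra.
pose proof PI_RGT_0 as Hpi.
assert (Hs : sqrt (1 - a²) = Rabs b).
{ replace (1 - a²) with (b²) by (unfold Rsqr; lra). apply sqrt_Rsqr_abs. }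
pose proof (acos_bound a) as Hb.
destruct (Rle_dec 0 b) as [Hb0|Hb0].
- exists (acos a). split; [lra|]. split; [apply cos_acos; auto|].
  rewrite sin_acos; auto. rewrite Hs. apply Rabs_right; lra.
- exists (- acos a). split.
  + split; [|lra].
    destruct (Req_dec (acos a) PI) as [E|E]; [|lra].
    exfalso. assert (a = -1) by (rewrite <- (cos_acos a Ha); rewrite E; apply cos_PI).
    assert (b * b = 0) by nra. assert (b = 0) by nra. lra.
  + split; [rewrite cos_neg; apply cos_acos; auto|].
    rewrite sin_neg sin_acos; auto. rewrite Hs. rewrite Rabs_left; lra.
Qed.
End Trig.

Section Arg.
Local Open Scope ring_scope.
Local Open Scope complex_scope.
Import GRing.Theory Num.Theory.

Definition ei (th : R) : CC := (cos th)%:C + 'i * (sin th)%:C.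

Lemma eiE th : ei th = Complex (cos th) (sin th).
Proof. by rewrite [RHS]complexE. Qed.

Lemma ei_add x y : ei x * ei y = ei (Rplus x y).
Proof. rewrite !eiE /= cos_plus sin_plus !RealsE; congr Complex; ring. Qed.

Lemma ei_conj x : conjc (ei x) * ei x = 1.
Proof.
rewrite eiE /=. have H := sin2_cos2 x. rewrite /Rsqr !RealsE in H.
apply/eqP; rewrite eq_complex /=; apply/andP; split; apply/eqP.
- rewrite -H; ring.
- ring.
Qed.

Definition unitc (z : CC) := z * conjc z = 1.

Lemma unitc_mul z w : unitc z -> unitc w -> unitc (z * w).
Proof.
rewrite /unitc => Hz Hw.
have -> : conjc (z * w) = conjc z * conjc w.
{ case: z {Hz} => a b; case: w {Hw} => c d /=; rewrite ?RealsE; congr Complex; ring. }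
by rewrite mulrACA Hz Hw mulr1.
Qed.

Lemma unitc_ei x : unitc (ei x).
Proof. by rewrite /unitc mulrC ei_conj. Qed.

Lemma arg_unit z : unitc z -> z = ei (arg z) /\ Rlt (Ropp PI) (arg z) /\ Rle (arg z) PI.
Proof.
case: z => a b; rewrite /unitc /= => Hz.
have Hab : Rplus (Rmult a a) (Rmult b b) = 1.
{ move: Hz => [H1 _]. rewrite !RealsE -H1. ring. }
have Hn : `|a +i* b| = 1.
{ rewrite normc_def /= !expr2. have -> : a * a + b * b = 1 := Hab. by rewrite sqrtr1. }
have Hex : exists th, (Rlt (Ropp PI) th /\ Rle th PI) /\ a +i* b = `|a +i* b| * ((cos th)%:C + 'i * (sin th)%:C).
{ have [th [[H1 H2] [H3 H4]]] := trig_exists Hab. exists th; split; [by split|].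
  rewrite Hn mul1r -/(ei th) eiE H3 H4 //. }
have [[H1 H2] H3] := epsilon_spec (inhabits R0) _ Hex.
rewrite /arg; split; [|by split].
by rewrite {1}H3 Hn mul1r.
Qed.

Lemma arg_shift z phi : unitc z ->
  exists k : Z, Rminus (arg (z * ei phi)) (Rplus (arg z) phi) = Rmult (Rmult 2 PI) (IZR k).
Proof.
move=> Hz.
have [E1 _] := arg_unit Hz.
have [E2 _] := arg_unit (unitc_mul Hz (unitc_ei phi)).
have E : ei (arg (z * ei phi)) = ei (Rplus (arg z) phi) by rewrite -E2 -ei_add -E1.
move: E; rewrite !eiE => -[Hc Hs].
have [k Hk] := trig_inj Hc Hs. by exists k.
Qed.
End Arg.
Section Helpers.
Local Open Scope R_scope.

Lemma within_clamp (g : R -> R) T : 0 <= T ->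
  (forall t, 0 <= t <= T -> filterlim g (within (fun s => 0 <= s <= T) (locally t)) (locally (g t))) ->
  forall s, continuous (fun s => g (clamp T s)) s.
Proof.
intros HT Hg s. unfold continuous.
apply filterlim_comp with (within (fun s => 0 <= s <= T) (locally (clamp T s))).
- intros P HP. unfold within in HP.
  assert (Hc := clamp_cont T s HT). unfold continuous in Hc.
  specialize (Hc _ HP). unfold filtermap in *.
  apply: filter_imp Hc. intros x Hx. apply Hx. apply clamp_in; auto.
- apply Hg. apply clamp_in; auto.
Qed.

Lemma cont_cos_comp (f : R -> R) t : continuous f t -> continuous (fun s => cos (f s)) t.
Proof.
intros Hf. apply: (continuous_comp f cos t Hf).
apply continuity_pt_filterlim. apply continuity_cos.
Qed.
Lemma cont_sin_comp (f : R -> R) t : continuous f t -> continuous (fun s => sin (f s)) t.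
Proof.
intros Hf. apply: (continuous_comp f sin t Hf).
apply continuity_pt_filterlim. apply continuity_sin.
Qed.
End Helpers.

Section CHelp.
Local Open Scope ring_scope.
Local Open Scope complex_scope.
Import GRing.Theory Num.Theory.

Lemma ceq (x y : CC) : cRe x = cRe y -> cIm x = cIm y -> x = y.
Proof. by case: x => a b; case: y => c d /= -> ->. Qed.

Lemma cder_loc (f g : R -> CC) t d : locally t (fun s => f s = g s) -> cder f t d -> cder g t d.
Proof.
move=> Hl [H1 H2]; split.
- apply: (is_derive_ext_loc (fun s => cRe (f s))) H1.
  apply: filter_imp Hl => s /= ->; done.
- apply: (is_derive_ext_loc (fun s => cIm (f s))) H2.
  apply: filter_imp Hl => s /= ->; done.
Qed.

Lemma cder_conj f t d : cder f t d -> cder (fun s => conjc (f s)) t (conjc d).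
Proof.
move=> [H1 H2]; split.
- apply: (@dR_ext (fun s => cRe (f s))); first by move=> s; case: (f s).
  by case: d H1 H2.
- apply: (@dR_ext (fun s => Ropp (cIm (f s)))); first by move=> s; case: (f s).
  case: d H1 H2 => a b /= H1 H2. exact: dR_opp.
Qed.

Lemma ccont_conj f t : ccont f t -> ccont (fun s => conjc (f s)) t.
Proof.
move=> [H1 H2]; split.
- apply: (@cR_ext (fun s => cRe (f s))) H1; by move=> s; case: (f s).
- apply: (@cR_ext (fun s => Ropp (cIm (f s)))); first by move=> s; case: (f s).
  exact: cR_opp.
Qed.

Lemma cconst (f : R -> CC) T bad : Rle 0 T -> (forall s, ccont f s) ->
  (forall t, Rlt 0 t /\ Rlt t T -> ~ In t bad -> cder f t 0) -> f 0 = f T.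
Proof.
move=> HT Hc Hd; apply: ceq.
- apply: (@const_pw (fun s => cRe (f s)) bad) => //.
  + by move=> x _; case: (Hc x).
  + by move=> x Hx Hn; case: (Hd x Hx Hn).
- apply: (@const_pw (fun s => cIm (f s)) bad) => //.
  + by move=> x _; case: (Hc x).
  + by move=> x Hx Hn; case: (Hd x Hx Hn).
Qed.

Lemma cder_ei (phi : R -> R) t d : is_derive phi t d ->
  cder (fun s => ei (phi s)) t ('i * d%:C * ei (phi t)).
Proof.
move=> Hd; split.
- apply: (@dR_ext (fun s => cos (phi s))); first by move=> s; rewrite eiE.
  apply: dR_eq; first exact: (is_derive_comp cos phi t _ _ (is_derive_cos (phi t)) Hd).
  rewrite eiE /= /scal /= /mult /= !RealsE; ring.
- apply: (@dR_ext (fun s => sin (phi s))); first by move=> s; rewrite eiE.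
  apply: dR_eq; first exact: (is_derive_comp sin phi t _ _ (is_derive_sin (phi t)) Hd).
  rewrite eiE /= /scal /= /mult /= !RealsE; ring.
Qed.

Lemma ccont_ei (phi : R -> R) t : continuous phi t -> ccont (fun s => ei (phi s)) t.
Proof.
move=> Hc; split.
- apply: (@cR_ext (fun s => cos (phi s))); first by move=> s; rewrite eiE.
  exact: cont_cos_comp.
- apply: (@cR_ext (fun s => sin (phi s))); first by move=> s; rewrite eiE.
  exact: cont_sin_comp.
Qed.

End CHelp.
Section Evol.
Local Open Scope ring_scope.
Local Open Scope complex_scope.
Import GRing.Theory Num.Theory.

Lemma det_evol n m T (G : R -> Op n) (W : Op n) : Rle 0 T ->
  (forall t, Rle 0 t /\ Rle t T -> forall x y, weight x != weight y -> G t x y = 0) ->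
  time_ordered_exp G T W ->
  exists (F : R -> CC) (bad : list R),
    F 0 = 1 /\ F T = \det (block W m) /\ (forall s, ccont F s) /\
    forall t, Rlt 0 t /\ Rlt t T -> ~ In t bad ->
      cder F t (- ('i * \tr (block (G t) m)) * F t).
Proof.
move=> HT HG [U [U0 [UT [Uc [bad Ud]]]]].
exists (fun s => \det (block (U (clamp T s)) m)), bad.
split; [|split; [|split]].
- rewrite clamp_id; last by split; [apply: Rle_refl|exact: HT].
  by rewrite U0 block1 det1.
- rewrite clamp_id; last by split; [exact: HT|apply: Rle_refl].
  by rewrite UT.
- move=> s; apply: ccont_det => i j.
  apply: (@ccont_ext (fun s => U (clamp T s) (enum_val i) (enum_val j))); first by move=> s'; rewrite mxE.
  split.
  + apply: (@within_clamp (fun s => cRe (U s (enum_val i) (enum_val j)))) => // t Ht.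
    by case: (Uc t Ht (enum_val i) (enum_val j)).
  + apply: (@within_clamp (fun s => cIm (U s (enum_val i) (enum_val j)))) => // t Ht.
    by case: (Uc t Ht (enum_val i) (enum_val j)).
- move=> t Ht Hn.
  have Hd := Ud t Ht Hn.
  have Ht' : Rle 0 t /\ Rle t T by case: Ht => H1 H2; split; apply: Rlt_le.
  have Hct : clamp T t = t by apply: clamp_id.
  set D := - ('i *: (G t *m U t)).
  have Hent : forall i j, cder (fun s => block (U (clamp T s)) m i j) t (block D m i j).
  { move=> i j. apply: (@cder_loc (fun s => U s (enum_val i) (enum_val j))).
    - apply: filter_imp (clamp_loc _ _ Ht) => s E. by rewrite mxE E.
    - rewrite mxE. exact: Hd. }
  have := cder_det Hent.
  rewrite Hct.
  have -> : block D m = ((- 'i) *: block (G t) m) *m block (U t) m.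
  { rewrite /D blockN blockZ block_mul; last first.
    - move=> x y Hx Hy; apply: HG => //; by rewrite Hx eq_sym.
    - by rewrite scalemxAl scaleNr mulNmx. }
  rewrite det_rowrep_mul mxtraceZ.
  congr cder. by rewrite mulNr.
Qed.
End Evol.
Section Phase.
Local Open Scope ring_scope.
Local Open Scope complex_scope.
Import GRing.Theory Num.Theory.

Lemma cder_eqd f t d d' : cder f t d -> d = d' -> cder f t d'.
Proof. by move=> H <-. Qed.

Lemma conjM (x y : CC) : conjc (x * y) = conjc x * conjc y.
Proof. case: x => a b; case: y => c d /=; rewrite ?RealsE; congr Complex; ring. Qed.
Lemma conjN (x : CC) : conjc (- x) = - conjc x.
Proof. by case: x => a b /=. Qed.
Lemma conj_i : conjc 'i = - 'i :> CC.
Proof. by apply: ceq => /=; rewrite ?oppr0. Qed.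
Lemma conj_real (x : R) : conjc (x%:C) = x%:C.
Proof. by apply: ceq => /=; rewrite ?oppr0. Qed.
Lemma realcM (x y : R) : (x * y)%:C = x%:C * y%:C :> CC.
Proof. apply: ceq => /=; rewrite ?RealsE; ring. Qed.
Lemma ei0 : ei 0 = 1.
Proof. by rewrite eiE cos_0 sin_0. Qed.
Lemma realcE (x : CC) : cIm x = 0 -> x = (cRe x)%:C.
Proof. by case: x => a b /= ->. Qed.

Lemma block_phase n m T (H : R -> Op n) (Z : Op n) (a : R -> R) (V V' : Op n) :
  Rle 0 T ->
  (forall t, Rle 0 t /\ Rle t T -> is_hermitian (H t)) ->
  (forall t, Rle 0 t /\ Rle t T -> forall x y, weight x != weight y -> H t x y = 0) ->
  (forall x y, x != y -> Z x y = 0) ->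
  (forall x, cIm (Z x x) = 0) ->
  piecewise_continuous a T ->
  time_ordered_exp H T V ->
  time_ordered_exp (fun t => H t + (a t)%:C *: Z) T V' ->
  unitc (\det (block V m)) /\
  \det (block V' m) = \det (block V m) * ei (Ropp (Rmult (cRe (\tr (block Z m))) (RInt a 0 T))).
Proof.
move=> HT Hherm HH HZ HZr Ha HV HV'.
have HH' : forall t, Rle 0 t /\ Rle t T -> forall x y, weight x != weight y ->
    (H t + (a t)%:C *: Z) x y = 0.
{ move=> t Ht x y Hxy. rewrite !mxE HH // HZ ?mulr0 ?addr0 //.
  by apply: contraNneq Hxy => ->. }
have [F [bad1 [F0 [FT [Fc Fd]]]]] := det_evol m HT HH HV.
have [F' [bad2 [F'0 [F'T [F'c F'd]]]]] := det_evol m HT HH' HV'.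
have Hint := pc_int _ _ Ha.
have [bad3 Hac] := pc_cont _ _ Ha.
set cz := cRe (\tr (block Z m)).
have Hcz : \tr (block Z m) = cz%:C.
{ apply: realcE; rewrite trace_block Im_sum; apply: big1 => x _; exact: HZr. }
have Hs : forall t, Rle 0 t /\ Rle t T -> \tr (block (H t) m) = (cRe (\tr (block (H t) m)))%:C.
{ move=> t Ht; apply: realcE; rewrite trace_block Im_sum; apply: big1 => x _.
  exact: herm_diag (Hherm t Ht) x. }
have Hin : forall t, Rlt 0 t /\ Rlt t T -> Rle 0 t /\ Rle t T.
{ by move=> t [H1 H2]; split; apply: Rlt_le. }
have Hh : F T * conjc (F T) = 1.
{ have := @cconst (fun s => F s * conjc (F s)) T bad1 HT.
  rewrite F0 conj_real mulr1 => -> //.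
  - by move=> s; apply: ccont_mul (Fc s) (ccont_conj (Fc s)).
  - move=> t Ht Hn. apply: cder_eqd; first exact: cder_mul (Fd t Ht Hn) (cder_conj (Fd t Ht Hn)).
    rewrite (Hs t (Hin t Ht)) conjM conjN conjM conj_i conj_real. ring. }
pose A := fun s => RInt a 0 (clamp T s).
pose E := fun s => ei (Rmult cz (A s)).
have Ec : forall s, ccont E s.
{ move=> s; apply: ccont_ei. apply: cR_mul; first exact: cR_const.
  apply: rint_cont => //. }
have Ed : forall t, Rlt 0 t /\ Rlt t T -> ~ In t bad3 -> cder E t ('i * (cz * a t)%:C * E t).
{ move=> t Ht Hn. apply: cder_ei. apply: is_derive_scal. apply: rint_der => //.
  exact: Hac. }
have E0 : E 0 = 1.
{ rewrite /E /A clamp_id; last by split; [apply: Rle_refl|exact: HT].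
  rewrite RInt_point. have -> : Rmult cz zero = 0 by rewrite /zero /= Rmult_0_r.
  exact: ei0. }
have Hk : F' T * conjc (F T) * E T = 1.
{ have := @cconst (fun s => F' s * conjc (F s) * E s) T (bad1 ++ bad2 ++ bad3) HT.
  rewrite F'0 F0 E0 conj_real !mulr1 => -> //.
  - by move=> s; apply: ccont_mul (ccont_mul (F'c s) (ccont_conj (Fc s))) (Ec s).
  - move=> t Ht Hn.
    have Hn1 : ~ In t bad1 by move=> Hi; apply: Hn; apply: in_or_app; left.
    have Hn2 : ~ In t bad2 by move=> Hi; apply: Hn; apply: in_or_app; right; apply: in_or_app; left.
    have Hn3 : ~ In t bad3 by move=> Hi; apply: Hn; apply: in_or_app; right; apply: in_or_app; right.
    apply: cder_eqd; first exact: cder_mul (cder_mul (F'd t Ht Hn2) (cder_conj (Fd t Ht Hn1))) (Ed t Ht Hn3).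
    rewrite blockD blockZ mxtraceD mxtraceZ Hcz (Hs t (Hin t Ht)) realcM.
    rewrite conjM conjN conjM conj_i conj_real. ring. }
have ET : E T = ei (Rmult cz (RInt a 0 T)).
{ rewrite /E /A clamp_id //; by split; [exact: HT|apply: Rle_refl]. }
have He : E T * ei (Ropp (Rmult cz (RInt a 0 T))) = 1.
{ rewrite ET ei_add Rplus_opp_r. exact: ei0. }
split; first by rewrite -FT.
rewrite -FT -F'T.
set e := ei _.
transitivity (F' T * (F T * conjc (F T)) * (E T * e)); first by rewrite Hh He !mulr1.
transitivity (F T * (F' T * conjc (F T) * E T) * e); first by ring.
by rewrite Hk mulr1.
Qed.
End Phase.
Section Comb.
Local Open Scope ring_scope.
Local Open Scope complex_scope.
Import GRing.Theory Num.Theory.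

Lemma card_setT (T : finType) : #|{set T}| = (2 ^ #|T|)%N.
Proof. rewrite -(cardsT {set T}) -powersetT card_powerset cardsT. done. Qed.

Lemma bits_inj_nat (n x y : nat) : (x < 2 ^ n)%N -> (y < 2 ^ n)%N ->
  (forall j, (j < n)%N -> odd (x %/ 2 ^ j) = odd (y %/ 2 ^ j)) -> x = y.
Proof.
elim: n x y => [|n IH] x y Hx Hy Hb.
- by move: Hx Hy; rewrite expn0 !ltnS !leqn0 => /eqP -> /eqP ->.
- have H0 := Hb 0%N (ltn0Sn n). rewrite !expn0 !divn1 in H0.
  have Hd : (x %/ 2 = y %/ 2)%N.
  { apply: IH.
    - by rewrite ltn_divLR // -expnSr.
    - by rewrite ltn_divLR // -expnSr.
    - move=> j Hj. rewrite -!divnMA -expnS. exact: Hb. }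
  by rewrite (divn_eq x 2) (divn_eq y 2) Hd !modn2 H0.
Qed.

Definition Sbits n (x : 'I_(2 ^ n)) : {set 'I_n} := [set j | bit x j].

Lemma Sbits_inj n : injective (@Sbits n).
Proof.
move=> x y E; apply: val_inj; apply: (@bits_inj_nat n); [exact: ltn_ord|exact: ltn_ord|move=> j Hj].
have := congr1 (fun A : {set 'I_n} => Ordinal Hj \in A) E; rewrite /= !inE; done.
Qed.

Lemma Sbits_bij n : bijective (@Sbits n).
Proof. apply: inj_card_bij; first exact: Sbits_inj. by rewrite card_setT !card_ord. Qed.

Lemma weightE n (x : 'I_(2 ^ n)) : weight x = #|Sbits x|.
Proof.
rewrite /weight -sum1_card [RHS]big_mkcond /=; apply: eq_bigr => j _; rewrite inE.
by case: (bit x j).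
Qed.

Definition Gs n (K A : {set 'I_n}) : CC := (-1) ^+ #|K :&: A|.

Lemma zE n (K : {set 'I_n}) (x : 'I_(2 ^ n)) :
  \prod_(j in K) (if bit x j then -1 else 1 : CC) = Gs K (Sbits x).
Proof.
rewrite /Gs -sum1_card.
have -> : \prod_(j in K) (if bit x j then -1 else 1 : CC) = \prod_(j in K) (-1) ^+ (bit x j : nat).
{ by apply: eq_bigr => j _; case: (bit x j). }
rewrite prodrXr; congr (_ ^+ _).
rewrite big_mkcond [RHS]big_mkcond /=; apply: eq_bigr => j _; rewrite !inE.
by case: (j \in K); case: (bit x j).
Qed.

Definition cm n (K : {set 'I_n}) (m : nat) : CC := \sum_(A : {set 'I_n} | #|A| == m) Gs K A.

Lemma trace_Zprod n (K : {set 'I_n}) m : \tr (block (Zprod K) m) = cm K m.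
Proof.
rewrite trace_block Zprod_diag.
have -> : \sum_(x in weight_states n m) diag_mx (\row_x0 \prod_(j in K) (if bit x0 j then -1 else 1 : CC)) x x
   = \sum_(x | #|Sbits x| == m) Gs K (Sbits x).
{ apply: eq_big => x; first by rewrite unfold_in /= weightE.
  move=> _; by rewrite !mxE eqxx mulr1n zE. }
rewrite /cm (reindex (@Sbits n)) //=. apply: onW_bij; exact: Sbits_bij.
Qed.

End Comb.
Section CmVals.
Local Open Scope ring_scope.
Local Open Scope complex_scope.
Import GRing.Theory Num.Theory.

Lemma cardI1 n (K : {set 'I_n}) j : #|K :&: [set j]| = (j \in K) :> nat.
Proof.
case jK: (j \in K).
- have -> : K :&: [set j] = [set j] by apply/setP => x; rewrite !inE; case: eqP => [->|_]; rewrite ?jK ?andbF ?andbT.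
  by rewrite cards1.
- have -> : K :&: [set j] = set0 by apply/setP => x; rewrite !inE; case: eqP => [->|_]; rewrite ?jK ?andbF ?andbT.
  by rewrite cards0.
Qed.

Lemma cm0 n (K : {set 'I_n}) : cm K 0 = 1.
Proof.
rewrite /cm (big_pred1 set0); last by move=> A; rewrite /= cards_eq0.
by rewrite /Gs setI0 cards0 expr0.
Qed.

Lemma cmn n (K : {set 'I_n}) : cm K n = (-1) ^+ #|K|.
Proof.
rewrite /cm (big_pred1 [set: 'I_n]); first by rewrite /Gs setIT.
move=> A /=.
have HA : (#|A| <= n)%N.
{ have := subset_leq_card (subsetT A); by rewrite cardsT card_ord. }
rewrite eqEcard subsetT cardsT card_ord /= eqn_leq HA //.
Qed.

Lemma sum_card1 n (F : {set 'I_n} -> CC) :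
  \sum_(A : {set 'I_n} | #|A| == 1%N) F A = \sum_(j < n) F [set j].
Proof.
transitivity (\sum_(A : {set 'I_n} | #|A| == 1%N) \sum_(j < n | A == [set j]) F A).
{ apply: eq_bigr => A HA. have /cards1P [x Ex] : #|A| == 1%N by exact: HA. rewrite Ex.
  rewrite (big_pred1 x) // => j /=; by rewrite (inj_eq set1_inj) eq_sym. }
rewrite (exchange_big_dep xpredT) //=; apply: eq_bigr => j _.
rewrite (big_pred1 [set j]) // => A /=.
by case: (A =P [set j]) => [->|_]; rewrite ?cards1 ?andbF ?eqxx.
Qed.

Lemma sum_sign n (K : {set 'I_n}) :
  \sum_(j < n) ((-1) ^+ (j \in K) : CC) = n%:R - 2%:R * #|K|%:R.
Proof.
have -> : \sum_(j < n) ((-1) ^+ (j \in K) : CC) = \sum_(j < n) (1 - 2%:R * ((j \in K) : nat)%:R).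
{ apply: eq_bigr => j _; case: (j \in K) => /=; ring. }
rewrite sumrB sumr_const card_ord -big_distrr /= -natr_sum; congr (_ - _ * _%:R).
rewrite -sum1_card [RHS]big_mkcond /=; apply: eq_bigr => j _; by case: (j \in K).
Qed.

Lemma cm1 n (K : {set 'I_n}) : cm K 1 = n%:R - 2%:R * #|K|%:R.
Proof.
rewrite /cm sum_card1 -sum_sign; apply: eq_bigr => j _; by rewrite /Gs cardI1.
Qed.

Lemma cmn1 n (K : {set 'I_n}) : (1 <= n)%N -> cm K n.-1 = (-1) ^+ #|K| * cm K 1.
Proof.
move=> Hn.
rewrite /cm (reindex_inj (@setC_inj _)) /=.
have -> : \sum_(A : {set 'I_n} | #|~: A| == n.-1) Gs K (~: A) = \sum_(A : {set 'I_n} | #|A| == 1%N) Gs K (~: A).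
{ apply: eq_bigl => A. have := cardsC A; rewrite card_ord => E.
  apply/eqP/eqP; lia. }
rewrite !sum_card1 big_distrr /=; apply: eq_bigr => j _.
rewrite /Gs -setDE cardI1.
have E := cardsD1 j K.
rewrite E exprD mulrC mulrA -exprD addnn -muln2 exprM sqrr_sign mul1r.
done.
Qed.
End CmVals.
Section Arith.
Local Open Scope R_scope.

Lemma four_R : GRing.natmul (1 : R) 4%N = 4.
Proof. rewrite -INRE. simpl. lra. Qed.

Lemma arith_gen (tp0 tp1 tpn tpn1 t0 t1 tn tn1 c0 c1 cn cn1 A N X : R) (z0 z1 zn zn1 : Z) :
  tp0 - (t0 + - (c0 * A)) = 2 * PI * IZR z0 ->
  tp1 - (t1 + - (c1 * A)) = 2 * PI * IZR z1 ->
  tpn - (tn + - (cn * A)) = 2 * PI * IZR zn ->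
  tpn1 - (tn1 + - (cn1 * A)) = 2 * PI * IZR zn1 ->
  X = (cn1 - c1 - N * (cn - c0)) * A ->
  (exists m : nat, N = INR m) ->
  exists z : Z, (tpn1 - tp1 - N * (tpn - tp0)) - ((tn1 - t1 - N * (tn - t0)) - X) = 2 * PI * IZR z.
Proof.
intros H0 H1 Hn Hn1 HX [m Hm].
exists (Z.sub (Z.sub zn1 z1) (Z.mul (Z.of_nat m) (Z.sub zn z0))).
rewrite !minus_IZR mult_IZR !minus_IZR -INR_IZR_INZ -Hm.
assert (D0 : tp0 = t0 - c0 * A + 2 * PI * IZR z0) by lra.
assert (D1 : tp1 = t1 - c1 * A + 2 * PI * IZR z1) by lra.
assert (Dn : tpn = tn - cn * A + 2 * PI * IZR zn) by lra.
assert (Dn1 : tpn1 = tn1 - cn1 * A + 2 * PI * IZR zn1) by lra.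
rewrite D0 D1 Dn Dn1 HX. lra.
Qed.

Lemma arith_even_X c0 c1 cn cn1 A N : cn1 = c1 -> cn = c0 -> 0 = (cn1 - c1 - N * (cn - c0)) * A.
Proof. intros -> ->. lra. Qed.

Lemma arith_odd_X c0 c1 cn cn1 A N nn k K1 : cn1 = - c1 -> cn = - 1 -> c0 = 1 -> c1 = INR nn - 2 * INR k ->
  N = INR nn - 2 -> K1 = INR k - 1 ->
  4 * K1 * A = (cn1 - c1 - N * (cn - c0)) * A.
Proof. intros -> -> -> -> -> ->. lra. Qed.

End Arith.

Section Final.
Local Open Scope ring_scope.
Local Open Scope complex_scope.
Import GRing.Theory.

Lemma theta_shift n m T (H : R -> Op n) (K : {set 'I_n}) (a : R -> R) (V V' : Op n) :
  Rle 0 T ->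
  (forall t, Rle 0 t /\ Rle t T -> is_hermitian (H t)) ->
  (forall t, Rle 0 t /\ Rle t T -> U1_invariant (H t)) ->
  piecewise_continuous a T ->
  time_ordered_exp H T V ->
  time_ordered_exp (fun t => H t + (a t)%:C *: Zprod K) T V' ->
  exists z : Z, Rminus (theta V' m) (Rplus (theta V m) (Ropp (Rmult (cRe (cm K m)) (RInt a 0 T))))
     = Rmult (Rmult 2 PI) (IZR z).
Proof.
move=> HT Hherm HU1 Ha HV HV'.
have HH : forall t, Rle 0 t /\ Rle t T -> forall x y, weight x != weight y -> H t x y = 0.
{ move=> t Ht; exact: U1_zero (HU1 t Ht). }
have HZ : forall x y, x != y -> Zprod K x y = 0.
{ move=> x y /negbTE Hxy; by rewrite Zprod_diag !mxE Hxy mulr0n. }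
have HZr : forall x, cIm (Zprod K x x) = 0.
{ move=> x; rewrite Zprod_diag !mxE eqxx mulr1n zE /Gs -signr_odd.
  by case: (odd _); rewrite ?expr1 ?expr0 ?ImN /= ?oppr0. }
have [Hu E] := block_phase m HT Hherm HH HZ HZr Ha HV HV'.
rewrite trace_Zprod in E.
rewrite /theta E. exact: arg_shift.
Qed.

Lemma cRe_nat (k : nat) : cRe (k%:R : CC) = k%:R.
Proof. by elim: k => // k IH; rewrite -addn1 !natrD ReD IH. Qed.
Lemma cIm_nat (k : nat) : cIm (k%:R : CC) = 0.
Proof. elim: k => // k IH; rewrite -addn1 !natrD ImD IH. by rewrite add0r. Qed.

Unset Implicit Arguments.

Theorem mainTheorem4 (n : nat) (T : R) (H : R -> Op n) (K : {set 'I_n}) (k : nat)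
  (a : R -> R) (V V' : Op n) :
  (2 <= n)%N ->
  Rle R0 T ->
  mx_piecewise_continuous H T ->
  (forall t, Rle R0 t /\ Rle t T -> is_hermitian (H t)) ->
  (forall t, Rle R0 t /\ Rle t T -> U1_invariant (H t)) ->
  (1 <= k <= n)%N -> #|K| = k ->
  piecewise_continuous a T ->
  time_ordered_exp H T V ->
  time_ordered_exp (fun t => H t + (a t)%:C *: Zprod K) T V' ->
  (~~ odd k -> eqmod2pi (Delta3 V') (Delta3 V)) /\
  (odd k -> eqmod2pi (Delta3 V')
                     (Rminus (Delta3 V) (Rmult (Rmult 4%:R (INR (k - 1)%N)) (RInt a R0 T)))).
Proof.
move=> Hn HT _ Hherm HU1 Hk HK Ha HV HV'.
have S := fun m => theta_shift m HT Hherm HU1 Ha HV HV'.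
have [z0 E0] := S 0%N.
have [z1 E1] := S 1%N.
have [zn En] := S n.
have [zn1 En1] := S n.-1.
set A := RInt a 0 T in E0 E1 En En1 *.
have Hn1 : (1 <= n)%N by apply: leq_trans Hn.
have C0 : cRe (cm K 0) = 1 by rewrite cm0.
have C1 : cRe (cm K 1) = Rminus (INR n) (Rmult 2 (INR k)).
{ by rewrite cm1 HK ReD ReN ReM !cRe_nat !cIm_nat mulr0 subr0 !INRE. }
have Cn1 : cm K n.-1 = (-1) ^+ k * cm K 1 by rewrite cmn1 // HK.
have Cn : cm K n = (-1) ^+ k by rewrite cmn HK.
have Hn2 : INR (n - 2)%N = Rminus (INR n) 2.
{ rewrite minus_INR; last by apply/leP. done. }
have Z2 : INR (n - 2)%N = IZR (Z.of_nat (n - 2)) by apply: INR_IZR_INZ.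
have Hk1 : INR (k - 1)%N = Rminus (INR k) 1.
{ rewrite minus_INR; last by apply/leP; case/andP: Hk. done. }
rewrite /Delta3 /eqmod2pi.
split => Hodd.
- have Hs : (-1) ^+ k = 1 :> CC by rewrite -signr_odd (negbTE Hodd).
  have Xe := @arith_even_X (cRe (cm K 0)) (cRe (cm K 1)) (cRe (cm K n)) (cRe (cm K n.-1)) A (INR (n - 2)%N).
  have X1 : cRe (cm K n.-1) = cRe (cm K 1) by rewrite Cn1 Hs mul1r.
  have X2 : cRe (cm K n) = cRe (cm K 0) by rewrite Cn Hs cm0.
  have [z Hz] := arith_gen E0 E1 En En1 (Xe X1 X2) (ex_intro _ (n - 2)%N erefl).
  exists z. rewrite -Hz. lra.
- have Hs : (-1) ^+ k = -1 :> CC by rewrite -signr_odd Hodd expr1.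
  have Xo := @arith_odd_X (cRe (cm K 0)) (cRe (cm K 1)) (cRe (cm K n)) (cRe (cm K n.-1)) A (INR (n - 2)%N) n k (INR (k - 1)%N).
  have X1 : cRe (cm K n.-1) = Ropp (cRe (cm K 1)) by rewrite Cn1 Hs mulN1r ReN.
  have X2 : cRe (cm K n) = Ropp 1 by rewrite Cn Hs ReN.
  have [z Hz] := arith_gen E0 E1 En En1 (Xo X1 X2 C0 C1 Hn2 Hk1) (ex_intro _ (n - 2)%N erefl).
  exists z. rewrite four_R -Hz. done.
Qed.
End Final.
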